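(* Let $p$ be a prime and $k$ any field of characteristic $p$. Then $R_1^{(p)}$ equals the $T$-space of $k_0\langle X\rangle$ generated by the single element $[x,\underbrace{y,\ldots,y}_{p-1}]$, where $x,y\in X$ are distinct.
   Context: $X=\{x_1,x_2,\ldots\}$ is a countably infinite set and $k_0\langle X\rangle$ is the free associative $k$-algebra (without identity) on $X$. A $T$-space is a $k$-linear subspace closed under every algebra endomorphism of $k_0\langle X\rangle$; the $T$-space generated by a subset is the smallest $T$-space containing it. $S_p(v_1,\ldots,v_p)=\sum_{\sigma\in\Sigma_p}\prod_{i=1}^p v_{\sigma(i)}$, and $R_1^{(p)}$ is the $T$-space generated by $S_p(x_1,\ldots,x_p)$. Commutators are left-normed: $[a,b]=ab-ba$, $[a_1,\ldots,a_{n+1}]=[[a_1,\ldots,a_n],a_{n+1}]$. *)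

(* Defs.v *)
From mathcomp Require Import all_boot all_order all_algebra all_fingroup.
Set Implicit Arguments. Unset Strict Implicit. Unset Printing Implicit Defensive.
Import GRing.Theory.
Local Open Scope ring_scope.

(* The free associative algebra without identity k_0<X>, X = {x_0, x_1, ...}
   (variables indexed by nat).  A word is a [seq nat]; an element is a
   function [seq nat -> k] (coefficient of each word) which has finite
   support and vanishes on the empty word.  Concretely, elements are
   presented by finite formal sums [ncp] = lists of (coefficient, word). *)

Section FreeAlg.
Variable k : fieldType.

Definition ncp := seq (k * seq nat).

Definition denote (P : ncp) : seq nat -> k :=
  fun w => \sum_(t <- P | t.2 == w) t.1.

Definition nc_noconst (P : ncp) : bool := all (fun t => t.2 != [::]) P.

Definition kX (f : seq nat -> k) : Prop :=
  exists P : ncp, nc_noconst P /\ f = denote P.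

Definition nc_var (i : nat) : ncp := [:: (1, [:: i])].
Definition nc_add (P Q : ncp) : ncp := P ++ Q.
Definition nc_scale (c : k) (P : ncp) : ncp := [seq (c * t.1, t.2) | t <- P].
Definition nc_mul (P Q : ncp) : ncp :=
  [seq (t.1 * u.1, t.2 ++ u.2) | t <- P, u <- Q].
Definition nc_comm (P Q : ncp) : ncp :=
  nc_add (nc_mul P Q) (nc_scale (-1) (nc_mul Q P)).

Definition nc_comm_iter (P Q : ncp) (n : nat) : ncp :=
  iter n (fun C => nc_comm C Q) P.

Definition nc_symm (p : nat) : ncp :=
  [seq (1, [seq nat_of_ord (s i) | i <- enum 'I_p]) | s : {perm 'I_p} <- enum {perm 'I_p}].

Definition nc_word_subst (g : nat -> ncp) (w : seq nat) : ncp :=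
  foldr (fun i acc => nc_mul (g i) acc) [:: (1, [::])] w.
Definition nc_subst (g : nat -> ncp) (P : ncp) : ncp :=
  flatten [seq nc_scale t.1 (nc_word_subst g t.2) | t <- P].

(* T-spaces: k-linear subspaces of k_0<X> closed under all endomorphisms.
   An endomorphism of k_0<X> is determined by arbitrary images g i in k_0<X>. *)
Definition Tspace (S : (seq nat -> k) -> Prop) : Prop :=
  [/\ forall f, S f -> kX f,
      S (fun _ => 0),
      forall f h, S f -> S h -> S (fun w => f w + h w),
      forall (c : k) f, S f -> S (fun w => c * f w) &
      forall (g : nat -> ncp) (P : ncp),
        (forall i, nc_noconst (g i)) -> nc_noconst P ->
        S (denote P) -> S (denote (nc_subst g P))].

Definition Tgen (A : (seq nat -> k) -> Prop) (f : seq nat -> k) : Prop :=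
  forall S, Tspace S -> (forall h, A h -> S h) -> S f.

Definition R1 (p : nat) : (seq nat -> k) -> Prop :=
  Tgen (fun h => h = denote (nc_symm p)).

End FreeAlg.

(* Main.v *)
Require Import Defs.
From mathcomp Require Import all_boot all_order all_algebra all_fingroup.
From mathcomp Require Import zify.
From Stdlib Require Import Lia FunctionalExtensionality.
Set Implicit Arguments. Unset Strict Implicit. Unset Printing Implicit Defensive.
Import GRing.Theory.
Local Open Scope ring_scope.


Section Basics.
Variable k : fieldType.
Implicit Types (P Q : ncp k) (w : seq nat).

Lemma denote_nil w : denote ([::] : ncp k) w = 0.
Proof. by rewrite /denote big_nil. Qed.

Lemma denote_cons t P w : denote (t :: P) w = (if t.2 == w then t.1 else 0) + denote P w.
Proof. by rewrite /denote big_cons; case: ifP => _; rewrite ?add0r. Qed.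

Lemma denote_cat P Q w : denote (P ++ Q) w = denote P w + denote Q w.
Proof. by rewrite /denote big_cat. Qed.

Lemma denote_map I (r : seq I) (c : I -> k) (W : I -> seq nat) w :
  denote [seq (c i, W i) | i <- r] w = \sum_(i <- r) (W i == w)%:R * c i.
Proof.
elim: r => [|i r IH]; first by rewrite denote_nil big_nil.
by rewrite /= denote_cons IH big_cons /=; case: eqP => _; rewrite ?mul1r ?mul0r.
Qed.

Lemma denote_scale c P w : denote (nc_scale c P) w = c * denote P w.
Proof.
elim: P => [|t P IH]; first by rewrite /= !denote_nil mulr0.
by rewrite /= !denote_cons IH mulrDr; case: ifP; rewrite ?mulr0.
Qed.

Lemma denote_flatten (L : seq (ncp k)) w :
  denote (flatten L) w = \sum_(P <- L) denote P w.
Proof.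
elim: L => [|P L IH]; first by rewrite denote_nil big_nil.
by rewrite /= denote_cat IH big_cons.
Qed.

Lemma denote_ones (ws : seq (seq nat)) w :
  denote [seq ((1 : k), u) | u <- ws] w = (count_mem w ws)%:R.
Proof.
elim: ws => [|u ws IH]; first by rewrite denote_nil.
rewrite /= denote_cons IH natrD; congr (_ + _).
by rewrite eq_sym; case: eqP.
Qed.

Lemma TS_eq (S : (seq nat -> k) -> Prop) (f h : seq nat -> k) : S f -> f = h -> S h. Proof. by move=> ? <-. Qed.

Lemma TS_sum (S : (seq nat -> k) -> Prop) I (r : seq I) (F : I -> seq nat -> k) :
  Tspace S -> (forall i, S (F i)) -> S (fun w => \sum_(i <- r) F i w).
Proof.
case=> _ H0 HD _ _ HF; elim: r => [|i r IH].
  by apply: TS_eq H0 _; apply: functional_extensionality => w; rewrite big_nil.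
apply: TS_eq (HD _ _ (HF i) IH) _.
by apply: functional_extensionality => w; rewrite big_cons.
Qed.

Lemma TS_scale (S : (seq nat -> k) -> Prop) c f : Tspace S -> S f -> S (fun w => c * f w).
Proof. by case=> _ _ _ HZ _; apply: HZ. Qed.

End Basics.


Section Comm.
Variable k : fieldType.
Implicit Types (P Q : ncp k) (w : seq nat).

Definition Rb (x : nat) (f : seq nat -> k) w :=
  if w is y :: w' then (if last y w' == x then f (belast y w') else 0) else 0.
Definition Lb (x : nat) (f : seq nat -> k) w :=
  if w is y :: w' then (if y == x then f w' else 0) else 0.

Lemma denote_mul_var_r P x w :
  denote (nc_mul P (nc_var k x)) w = Rb x (denote P) w.
Proof.
rewrite /nc_mul /nc_var allpairs1r.
elim: P => [|t P IH]; first by rewrite /Rb denote_nil; case: w => // y w; rewrite denote_nil if_same.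
rewrite /= denote_cons IH /Rb; case: w {IH} => [|y w] /=.
  by case: (t.2) => [|? ?]; rewrite add0r.
rewrite ?denote_cons cats1 lastI eqseq_rcons ?mulr1 (eq_sym x); case: (last y w == x); rewrite ?andbT ?andbF ?addr0 //.
Qed.

Lemma denote_mul_var_l P x w :
  denote (nc_mul (nc_var k x) P) w = Lb x (denote P) w.
Proof.
rewrite /nc_mul /nc_var allpairs1l /=.
elim: P => [|t P IH]; first by rewrite /Lb denote_nil; case: w => // y w; rewrite denote_nil if_same.
rewrite /= denote_cons IH /Lb; case: w {IH} => [|y w] /=; first by rewrite add0r.
rewrite denote_cons mul1r eqseq_cons eq_sym.
by case: (y == x); rewrite ?andbT ?andbF ?add0r.
Qed.

Lemma denote_comm_var P x w :
  denote (nc_comm P (nc_var k x)) w = Rb x (denote P) w - Lb x (denote P) w.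
Proof.
by rewrite /nc_comm /nc_add denote_cat denote_scale denote_mul_var_r denote_mul_var_l mulN1r.
Qed.

Variables a b : nat.

Definition cc (n i : nat) : k := (-1) ^+ i * ('C(n, i))%:R.
Definition cw (n i : nat) : seq nat := nseq i b ++ a :: nseq (n - i)%N b.
Definition EE (n : nat) : ncp k := [seq (cc n i, cw n i) | i <- index_iota 0 n.+1].

Lemma denote_EE n w : denote (EE n) w = \sum_(i < n.+1) (cw n i == w)%:R * cc n i.
Proof. by rewrite /EE denote_map big_mkord. Qed.

Lemma cw_r n i : (i <= n)%N -> cw n i ++ [:: b] = cw n.+1 i.
Proof.
move=> hi; rewrite /cw -catA /= subSn // -[_ ++ [:: b]]/(nseq (n - i)%N b ++ nseq 1 b).
by rewrite -nseqD addn1.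
Qed.

Lemma cw_l n i : b :: cw n i = cw n.+1 i.+1.
Proof. by []. Qed.

Lemma cc_S n i : cc n.+1 i.+1 = cc n i.+1 - cc n i.
Proof. by rewrite /cc binS natrD exprS mulrDr !mulN1r !mulNr. Qed.

Lemma cc_big n : cc n n.+1 = 0.
Proof. by rewrite /cc bin_small // mulr0. Qed.

Lemma denote_comm_EE n w :
  denote (nc_comm (EE n) (nc_var k b)) w = denote (EE n.+1) w.
Proof.
rewrite /nc_comm /nc_add denote_cat denote_scale /nc_mul /nc_var allpairs1r allpairs1l.
rewrite !denote_map /EE !big_map !big_mkord /=.
have -> : \sum_(i < n.+1) (cw n i ++ [:: b] == w)%:R * (cc n i * 1) =
          \sum_(i < n.+1) (cw n.+1 i == w)%:R * cc n i.
  by apply: eq_bigr => i _; rewrite cw_r ?mulr1 // -ltnS.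
have -> : \sum_(i < n.+1) (b :: cw n i == w)%:R * (1 * cc n i) =
          \sum_(i < n.+1) (cw n.+1 i.+1 == w)%:R * cc n i.
  by apply: eq_bigr => i _; rewrite mul1r.
rewrite big_ord_recl [in RHS]big_ord_recl.
have -> : \sum_(i < n.+1) (cw n.+1 (bump 0 i) == w)%:R * cc n.+1 (bump 0 i) =
   \sum_(i < n.+1) (cw n.+1 i.+1 == w)%:R * cc n i.+1 -
   \sum_(i < n.+1) (cw n.+1 i.+1 == w)%:R * cc n i.
  by rewrite -sumrB; apply: eq_bigr => i _; rewrite cc_S mulrBr.
have -> : \sum_(i < n) (cw n.+1 (bump 0 i) == w)%:R * cc n (bump 0 i) =
          \sum_(i < n.+1) (cw n.+1 i.+1 == w)%:R * cc n i.+1.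
  by rewrite big_ord_recr /= cc_big mulr0 addr0.
rewrite mulN1r !addrA; congr (_ + _ - _).
by rewrite /cc !bin0 !expr0.
Qed.

Lemma denote_comm_iter n :
  denote (nc_comm_iter (nc_var k a) (nc_var k b) n) = denote (EE n).
Proof.
elim: n => [|n IH]; apply: functional_extensionality => w.
  by rewrite /= /EE /= !denote_cons !denote_nil /cc bin0 expr0 mul1r.
by rewrite /nc_comm_iter iterS -/(nc_comm_iter _ _ n) denote_comm_var IH -denote_comm_var denote_comm_EE.
Qed.

End Comm.


Definition choices (L : nat -> seq nat) (v : seq nat) : seq (seq nat) :=
  foldr (fun x acc => [seq y :: u | y <- L x, u <- acc]) [:: [::]] v.

Lemma mem_choices L v w : (w \in choices L v) = all2 (fun x y => y \in L x) v w.
Proof.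
elim: v w => [|x v IH] [|y w] //=.
- by apply/negbTE/allpairsP => [[[? ?] /= [_ _]]].
- apply/allpairsP/andP => [[[y' u] /= [Hy Hu [-> ->]]]|[Hy Hw]].
    by rewrite -IH.
  by exists (y, w); rewrite /= Hy IH.
Qed.

Lemma uniq_choices L v : (forall x, uniq (L x)) -> uniq (choices L v).
Proof.
move=> HL; elim: v => [|x v IH] //=.
apply: allpairs_uniq => //; move=> [? ?] [? ?] _ _ /= [-> ->] //.
Qed.

Lemma count_choices L v w : (forall x, uniq (L x)) ->
  count_mem w (choices L v) = all2 (fun x y => y \in L x) v w.
Proof. by move=> HL; rewrite count_uniq_mem ?uniq_choices // mem_choices. Qed.

Section Subst.
Variable k : fieldType.

Lemma nc_mul_ones (l1 l2 : seq (seq nat)) :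
  nc_mul [seq ((1 : k), u) | u <- l1] [seq ((1 : k), u) | u <- l2] =
  [seq (1, u) | u <- [seq u1 ++ u2 | u1 <- l1, u2 <- l2]].
Proof.
elim: l1 => [|u1 l1 IH] //=.
rewrite /nc_mul /= map_cat -IH; congr (_ ++ _).
by rewrite -!map_comp; apply: eq_map => u /=; rewrite mulr1.
Qed.

Lemma word_subst_lin (g : nat -> ncp k) L v :
  (forall x, g x = [seq (1, [:: y]) | y <- L x]) ->
  nc_word_subst g v = [seq (1, u) | u <- choices L v].
Proof.
move=> Hg; elim: v => [|x v IH] //=.
rewrite /nc_word_subst /= -/(nc_word_subst g v) IH Hg.
have -> : [seq ((1 : k), [:: y]) | y <- L x] = [seq (1, u) | u <- [seq [:: y] | y <- L x]].
  by rewrite -map_comp.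
rewrite nc_mul_ones; congr map.
by rewrite allpairs_mapl.
Qed.

Lemma denote_subst (g : nat -> ncp k) (P : ncp k) w :
  denote (nc_subst g P) w = \sum_(t <- P) t.1 * denote (nc_word_subst g t.2) w.
Proof.
rewrite /nc_subst denote_flatten big_map; apply: eq_bigr => t _.
by rewrite denote_scale.
Qed.

Lemma denote_subst_lin (g : nat -> ncp k) L (P : ncp k) w :
  (forall x, g x = [seq (1, [:: y]) | y <- L x]) -> (forall x, uniq (L x)) ->
  denote (nc_subst g P) w =
  \sum_(t <- P) t.1 * (all2 (fun x y => y \in L x) t.2 w)%:R.
Proof.
move=> Hg HL; rewrite denote_subst; apply: eq_bigr => t _.
by rewrite (word_subst_lin _ Hg) denote_ones count_choices.
Qed.

Lemma noconst_lin L : nc_noconst [seq ((1 : k), [:: y]) | y <- L].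
Proof. by elim: L. Qed.

End Subst.


Lemma incl_excl (R : ringType) (T : finType) (M : {set T}) :
  \sum_(J : {set T}) (-1) ^+ #|~: J| * ((M \subset J)%:R : R) = (M == setT)%:R.
Proof.
have [->|HM] := eqVneq M setT.
  rewrite (bigD1 setT) //= setCT cards0 expr0 subxx mul1r big1 ?addr0 // => J HJ.
  by rewrite subTset (negbTE HJ) mulr0.
have : ~~ ([set: T] \subset M) by rewrite subTset.
case/subsetPn => e _ He.
rewrite (bigID (fun J : {set T} => e \in J)) /=.
rewrite (reindex_onto (fun J => e |: J) (fun J => J :\ e)) /=; last first.
  by move=> J HJ; rewrite setD1K.
rewrite (eq_bigl (fun J : {set T} => e \notin J)); last first.
  move=> J; rewrite setU11 /=; apply/eqP/idP => [<-|HeJ]; first by rewrite setD11.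
  by rewrite setU1K.
rewrite -big_split big1 // => J HJ.
have -> : (M \subset e |: J) = (M \subset J).
  apply/idP/idP => HMJ; last by apply: subset_trans HMJ (subsetUr _ _).
  apply/subsetP => x Hx; move/subsetP/(_ x Hx): HMJ; rewrite !inE.
  by case/orP => // /eqP Hxe; move: He; rewrite -Hxe Hx.
have -> : #|~: J| = #|~: (e |: J)|.+1.
  rewrite (cardsD1 e (~: J)) inE HJ /= add1n; congr (_.+1); apply: eq_card => x.
  by rewrite !inE negb_or.
by rewrite /= exprS mulN1r mulNr addrN.
Qed.



Lemma cc_one (k : fieldType) n : prime n.+1 -> n.+1 \in [pchar k] ->
  forall i, (i < n.+1)%N -> cc k n i = 1.
Proof.
move=> Hp Hc; elim=> [|i IH] Hi; first by rewrite /cc expr0 bin0 mul1r.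
have H0 : ('C(n.+1, i.+1)%:R : k) = 0.
  by apply/eqP; rewrite -(dvdn_pcharf Hc) prime_dvd_bin.
move: H0; rewrite binS natrD => /eqP; rewrite addr_eq0 => /eqP H.
by rewrite /cc H exprS mulrN mulN1r mulNr opprK -[RHS](IH (ltnW Hi)).
Qed.

Lemma wilson_k (k : fieldType) n : prime n.+1 -> n.+1 \in [pchar k] ->
  ((n`!)%:R : k) = -1.
Proof.
move=> Hp Hc; have := Hp; rewrite Wilson ?prime_gt1 //= (dvdn_pcharf Hc) -addn1 natrD.
by rewrite addr_eq0 => /eqP.
Qed.

Lemma nth_cw (a b n i j : nat) : (i < n.+1)%N -> (j < n.+1)%N ->
  nth 0%N (cw a b n i) j = if j == i then a else b.
Proof.
move=> Hi Hj; rewrite /cw nth_cat size_nseq.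
case: ltnP => Hji.
  by rewrite nth_nseq Hji (ltn_eqF Hji).
case: eqP => [->|Hne]; first by rewrite subnn.
have : (0 < j - i)%N by rewrite subn_gt0 ltn_neqAle eq_sym; apply/andP; split => //; apply/eqP => H; apply: Hne.
case E: (j - i)%N => [|m] // _ /=.
rewrite nth_nseq; case: ltnP => // Hm; exfalso.
move: Hj Hm E; lia.
Qed.


Lemma card_fix0 n (i : 'I_n.+1) : #|[pred s : {perm 'I_n.+1} | s i == ord0]| = n`!.
Proof.
pose P (i : 'I_n.+1) := [pred s : {perm 'I_n.+1} | s i == ord0].
have Hle : forall i j, (#|P i| <= #|P j|)%N.
  move=> i1 j1.
  rewrite -(card_imset (P i1) (mulgI (tperm i1 j1))).
  apply: subset_leq_card; apply/subsetP => x /imsetP [s Hs ->].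
  by rewrite !inE permM tpermR.
have Heq : forall j, #|P j| = #|P ord0| by move=> j; apply/eqP; rewrite eqn_leq !Hle.
have Hsum : (\sum_(j < n.+1) #|P j| = (n.+1)`!)%N.
  rewrite -card_Sn.
  have -> : (\sum_(j < n.+1) #|P j| = \sum_(j < n.+1) \sum_(s : {perm 'I_n.+1}) (s j == ord0 : nat))%N.
    apply: eq_bigr => j _; rewrite -sum1_card big_mkcond /=.
    by apply: eq_bigr => s _; rewrite /P inE; case: eqP.
  rewrite exchange_big /= -sum1_card; apply: eq_bigr => s _.
  rewrite (bigD1 ((s^-1)%g ord0)) //= permKV eqxx big1 // => j Hj.
  by case: eqP => // H; case/negP: Hj; rewrite -H permK.
move: Hsum; rewrite (eq_bigr (fun _ => #|P ord0|)) // sum_nat_const card_ord factS.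
by move/eqP; rewrite eqn_pmul2l // Heq => /eqP.
Qed.

Lemma all2_single (h : nat -> nat) v w :
  all2 (fun x y => y \in [:: h x]) v w = (map h v == w).
Proof.
elim: v w => [|x v IH] [|y w] //=.
by rewrite inE IH eqseq_cons eq_sym.
Qed.

Lemma size_cw a b n i : (i < n.+1)%N -> size (cw a b n i) = n.+1.
Proof. by move=> Hi; rewrite /cw size_cat /= !size_nseq; lia. Qed.

Lemma ws_cw a b n (s : {perm 'I_n.+1}) :
  [seq (if x == 0%N then a else b) | x <- [seq nat_of_ord (s i) | i <- enum 'I_n.+1]]
  = cw a b n ((s^-1)%g ord0).
Proof.
apply: (@eq_from_nth _ 0%N); first by rewrite !size_map -enumT size_enum_ord size_cw.
rewrite !size_map -enumT size_enum_ord => j Hj.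
rewrite -map_comp (nth_map ord0); last by rewrite -?enumT size_enum_ord.
have -> : nth ord0 (enum 'I_n.+1) j = Ordinal Hj.
  by apply: val_inj; rewrite /= -?enumT nth_enum_ord.
rewrite nth_cw //=.
have -> : (nat_of_ord (s (Ordinal Hj)) == 0%N) = (Ordinal Hj == (s^-1)%g ord0).
  apply/eqP/eqP => [H|->]; last by rewrite permKV.
  by rewrite -[Ordinal Hj](permK s); congr (_ _); apply: val_inj.
by [].
Qed.

Lemma dir2_denote (k : fieldType) n a b w : prime n.+1 -> n.+1 \in [pchar k] ->
  denote (nc_subst (fun x => nc_var k (if x == 0%N then a else b)) (nc_symm k n.+1)) w
  = - denote (EE k a b n) w.
Proof.
move=> Hp Hc.
rewrite (@denote_subst_lin _ _ (fun x => [:: if x == 0%N then a else b])) //.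
rewrite /nc_symm big_map.
under eq_bigr => s _ do rewrite /= all2_single ws_cw mul1r.
rewrite (partition_big (fun s : {perm 'I_n.+1} => (s^-1)%g ord0) xpredT) //=.
rewrite denote_EE -sumrN; apply: eq_bigr => j _.
rewrite cc_one // mulr1.
rewrite (eq_bigr (fun _ => (cw a b n j == w)%:R)); last by move=> i /eqP ->.
rewrite big_enum_cond /= (eq_bigl (mem [pred i : {perm 'I_n.+1} | (i^-1)%g ord0 == j])) //.
rewrite sumr_const.
have -> : #|[pred i : {perm 'I_n.+1} | (i^-1)%g ord0 == j]| = n`!.
  rewrite -(card_fix0 j); apply: eq_card => s; rewrite !inE.
  apply/eqP/eqP => [<-|<-]; by rewrite ?permKV ?permK.
by rewrite -[X in X = _]mulr_natr (wilson_k Hp Hc) mulrN1.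
Qed.


Lemma all2_nth (r : nat -> nat -> bool) s t :
  all2 r s t = (size s == size t) &&
               all (fun j => r (nth 0%N s j) (nth 0%N t j)) (iota 0 (size s)).
Proof.
elim: s t => [|x s IH] [|y t] //=.
rewrite IH eqSS -add1n iotaDl all_map.
by rewrite [in RHS]andbCA; congr (_ && (_ && _)); apply: eq_all => j.
Qed.

Section Dir1.
Variables (k : fieldType) (n a b : nat).
Hypothesis Hab : a != b.

Definition posT (i : nat) (w : seq nat) : bool :=
  (size w == n.+1) &&
  all (fun j => if j == i then nth 0%N w j == 0%N else (0 < nth 0%N w j < n.+1)%N) (iota 0 n.+1).

Definition Mw (w : seq nat) : {set 'I_n} := [set j : 'I_n | (nat_of_ord j).+1 \in w].

Definition LJ (J : {set 'I_n}) : seq nat := [seq (nat_of_ord j).+1 | j <- enum J].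
Definition LL (J : {set 'I_n}) (x : nat) : seq nat := if x == a then [:: 0%N] else LJ J.

Lemma uniq_LL J x : uniq (LL J x).
Proof.
rewrite /LL; case: ifP => // _; rewrite /LJ map_inj_uniq ?enum_uniq //.
by move=> i j [] /val_inj.
Qed.

Lemma posJ_split J i w : (i < n.+1)%N ->
  all2 (fun x y => y \in LL J x) (cw a b n i) w = posT i w && (Mw w \subset J).
Proof.
move=> Hi; rewrite all2_nth size_cw // /posT eq_sym -andbA.
case Hs: (size w == n.+1); rewrite ?andFb ?andTb //.
have -> : all (fun j => nth 0%N w j \in LL J (nth 0%N (cw a b n i) j)) (iota 0 n.+1) =
          all (fun j => if j == i then nth 0%N w j == 0%N else nth 0%N w j \in LJ J) (iota 0 n.+1).
  apply: eq_in_all => j; rewrite mem_iota add0n => Hj /=; rewrite nth_cw // /LL.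
  by case: (j == i); rewrite ?eqxx ?inE // eq_sym (negbTE Hab).
apply/idP/andP => [H|[H1 /subsetP H2]].
  split.
    apply/allP => j Hj; move/allP/(_ j Hj): H; case: (j == i) => //.
    by case/mapP => y _ ->; apply/andP; split => //; rewrite ltnS; exact: ltn_ord.
  apply/subsetP => y; rewrite inE => Hy.
  have Hj := nth_index 0%N Hy; set j := index _ _ in Hj.
  have Hjs : (j < n.+1)%N by rewrite -(eqP Hs) index_mem.
  move/allP/(_ j): H; rewrite mem_iota add0n Hjs Hj => /(_ isT).
  case: (j == i) => // /mapP [z]; rewrite mem_enum => Hz [] Hzy.
  by have -> : y = z by apply: val_inj.
apply/allP => j; rewrite mem_iota add0n => Hj.
move/allP/(_ j): H1; rewrite mem_iota add0n Hj => /(_ isT).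
case: (j == i) => // /andP [H0 Hn].
have Hz : ((nth 0%N w j).-1 < n)%N by move: H0 Hn; lia.
have -> : nth 0%N w j = (Ordinal Hz).+1 by rewrite /=; move: H0; lia.
apply: map_f; rewrite mem_enum; apply: H2; rewrite inE /=.
have -> : (nth 0%N w j).-1.+1 = nth 0%N w j by move: H0; lia.
by apply: mem_nth; rewrite (eqP Hs).
Qed.

Definition ws (s : {perm 'I_n.+1}) : seq nat := [seq nat_of_ord (s i) | i <- enum 'I_n.+1].

Lemma size_ws s : size (ws s) = n.+1.
Proof. by rewrite /ws size_map -?enumT size_enum_ord. Qed.

Lemma nth_ws s j (Hj : (j < n.+1)%N) : nth 0%N (ws s) j = s (Ordinal Hj).
Proof.
rewrite /ws (nth_map ord0); last by rewrite -?enumT size_enum_ord.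
by congr (nat_of_ord (s _)); apply: val_inj; rewrite /= -?enumT nth_enum_ord.
Qed.

Lemma ws_inj : injective ws.
Proof.
move=> s1 s2 H; apply/permP => x.
have E : forall s, nth 0%N (ws s) x = s x.
  by move=> s; rewrite (nth_ws s (ltn_ord x)); congr (nat_of_ord (s _)); apply: val_inj.
by apply: val_inj; rewrite /= -!E H.
Qed.

Lemma posT_ws s (i : 'I_n.+1) : posT i (ws s) = (s i == ord0).
Proof.
rewrite /posT size_ws eqxx andTb; apply/allP/eqP => [H|H0 j].
  move: (H i); rewrite mem_iota add0n ltn_ord eqxx nth_ws => /(_ isT) /eqP Hi.
  by apply: val_inj; rewrite /= -Hi; congr (nat_of_ord (s _)); apply: val_inj.
rewrite mem_iota add0n => Hj; rewrite nth_ws ltn_ord andbT.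
case: eqP => [Hji|Hji].
  have -> : Ordinal Hj = i by apply: val_inj.
  by rewrite H0.
rewrite lt0n; apply/eqP => Hz; apply: Hji.
have : s (Ordinal Hj) = s i by apply: val_inj; rewrite H0 /= Hz.
by move/perm_inj => <-.
Qed.

Lemma Mw_ws s : Mw (ws s) = setT.
Proof.
apply/setP => j; rewrite !inE.
have Hj : ((nat_of_ord j).+1 < n.+1)%N by rewrite ltnS ltn_ord.
have -> : (nat_of_ord j).+1 = nat_of_ord (s ((s^-1)%g (Ordinal Hj))) by rewrite permKV.
by apply: map_f; rewrite mem_enum.
Qed.

Lemma ws_exists i w : (i < n.+1)%N -> posT i w -> Mw w = setT -> exists s, ws s = w.
Proof.
move=> Hi; case/andP => /eqP Hs /allP H HM.
have Hlt : forall y, y \in w -> (y < n.+1)%N.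
  move=> y Hy; have := nth_index 0%N Hy; set j := index _ _ => <-.
  have Hj : (j < n.+1)%N by rewrite -Hs index_mem.
  move: (H j); rewrite mem_iota add0n Hj => /(_ isT).
  by case: (j == i) => [/eqP ->|/andP [_ ->]].
have Hsub : forall m, (m < n.+1)%N -> m \in w.
  case=> [|m] Hm.
    move: (H i); rewrite mem_iota add0n Hi eqxx => /(_ isT) /eqP <-.
    by apply: mem_nth; rewrite Hs.
  have Hm' : (m < n)%N by rewrite -ltnS.
  by move: (in_setT (Ordinal Hm')); rewrite -HM inE.
have Hu : uniq w.
  have Heq : iota 0 n.+1 =i w.
    by move=> y; rewrite mem_iota add0n; apply/idP/idP; [apply: Hsub | apply: Hlt].
  by rewrite (uniq_size_uniq (iota_uniq 0 n.+1) Heq) size_iota Hs.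
pose f (j : 'I_n.+1) : 'I_n.+1 := inord (nth 0%N w j).
have Hf : injective f.
  move=> j1 j2; rewrite /f => /(congr1 (@nat_of_ord _)); rewrite !inordK; last first.
  - by apply: Hlt; apply: mem_nth; rewrite Hs.
  - by apply: Hlt; apply: mem_nth; rewrite Hs.
  by move/eqP; rewrite nth_uniq ?Hs // => /eqP /val_inj.
exists (perm Hf); apply: (@eq_from_nth _ 0%N); first by rewrite size_ws Hs.
rewrite size_ws => j Hj; rewrite nth_ws permE /f inordK //.
by apply: Hlt; apply: mem_nth; rewrite Hs.
Qed.

Lemma comb w : \sum_(i < n.+1) ((posT i w && (Mw w == setT))%:R : k) =
   \sum_(s <- enum {perm 'I_n.+1}) (ws s == w)%:R * 1.
Proof.
case: (boolP [exists s : {perm 'I_n.+1}, ws s == w]) => [/existsP [s0 /eqP <-]|/existsPn Hno].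
  rewrite [in RHS](bigD1_seq s0) ?mem_enum ?enum_uniq //= eqxx mul1r [in RHS]big1_seq ?addr0; last first.
    move=> s /andP [Hs _]; case: eqP => [Hss|]; last by rewrite mul0r.
    by move: (ws_inj Hss) Hs => ->; rewrite eqxx.
  rewrite Mw_ws eqxx (bigD1 ((s0^-1)%g ord0)) //= posT_ws permKV eqxx /= big1 ?addr0 //.
  move=> j Hj; rewrite posT_ws /=; case: eqP => // H; case/negP: Hj.
  by rewrite -H permK.
rewrite [in RHS]big1_seq; last by move=> s _; rewrite (negbTE (Hno s)) mul0r.
apply: big1 => i _; case: (boolP (posT i w && (Mw w == setT))) => // /andP [H1 /eqP H2].
by case: (ws_exists (ltn_ord i) H1 H2) => s Hs; move: (Hno s); rewrite Hs eqxx.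
Qed.

End Dir1.


Lemma natr_andb (R : fieldType) (b1 b2 : bool) : ((b1 && b2)%:R : R) = b1%:R * b2%:R.
Proof. by case: b1; case: b2; rewrite ?mulr1 ?mulr0. Qed.

Lemma noconst_EE (k : fieldType) a b n : nc_noconst (EE k a b n).
Proof.
rewrite /nc_noconst /EE all_map; apply/allP => i _ /=.
by rewrite -size_eq0 /cw size_cat /= addnS.
Qed.

Lemma dir1 (k : fieldType) n a b (S : (seq nat -> k) -> Prop) :
  prime n.+1 -> n.+1 \in [pchar k] -> a != b -> Tspace S ->
  S (denote (EE k a b n)) -> S (denote (nc_symm k n.+1)).
Proof.
move=> Hp Hc Hab HS HE.
pose gJ (J : {set 'I_n}) x := [seq ((1 : k), [:: y]) | y <- LL a J x].
have HF : forall J, S (denote (nc_subst (gJ J) (EE k a b n))).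
  move=> J; case: HS => _ _ _ _ Hsub; apply: Hsub => //.
    by move=> x; apply: noconst_lin.
  exact: noconst_EE.
have HT := TS_sum (index_enum {set 'I_n}) HS (fun J => TS_scale ((-1) ^+ #|~: J|) HS (HF J)).
apply: TS_eq HT _; apply: functional_extensionality => w.
rewrite /nc_symm denote_map.
transitivity (\sum_(i < n.+1) ((posT n i w && (Mw n w == setT))%:R : k)); last exact: comb.
have -> : \sum_(J <- index_enum {set 'I_n}) (-1) ^+ #|~: J| * denote (nc_subst (gJ J) (EE k a b n)) w
   = \sum_(J : {set 'I_n}) \sum_(i < n.+1) (-1) ^+ #|~: J| * ((posT n i w)%:R * (Mw n w \subset J)%:R).
  apply: eq_bigr => J _; rewrite (@denote_subst_lin _ _ (LL a J)) //; last exact: uniq_LL.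
  rewrite mulr_sumr /EE big_map big_mkord; apply: eq_bigr => i _ /=.
  by rewrite cc_one // mul1r posJ_split // natr_andb.
rewrite exchange_big /=; apply: eq_bigr => i _.
rewrite natr_andb -(incl_excl k (Mw n w)) mulr_sumr; apply: eq_bigr => J _.
by rewrite mulrCA.
Qed.

Unset Implicit Arguments.

Theorem proposition4p2 (p : nat) (k : fieldType) (a b : nat) :
  prime p -> p \in [pchar k] -> a <> b ->
  forall f : seq nat -> k,
    R1 p f <->
    Tgen (fun h => h = denote (nc_comm_iter (nc_var k a) (nc_var k b) p.-1)) f.
Proof.
case: p => [//|n] Hp Hc Hab f /=.
have Hab' : a != b by apply/eqP.
have HC := denote_comm_iter k a b n.
split.
- move=> HR S HS Hgen; apply: HR => // h ->.
  apply: dir1 Hp Hc Hab' HS _; rewrite -HC; exact: Hgen.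
- move=> HT S HS Hgen; apply: HT => // h ->; rewrite HC.
  have Hsym : S (denote (nc_symm k n.+1)) by apply: Hgen.
  have Hn : nc_noconst (nc_symm k n.+1).
    rewrite /nc_noconst /nc_symm all_map; apply/allP => s _ /=.
    by rewrite -size_eq0 size_map -?enumT size_enum_ord.
  case: (HS) => _ _ _ _ Hsub.
  have := Hsub (fun x => nc_var k (if x == 0%N then a else b)) (nc_symm k n.+1) (fun _ => erefl) Hn Hsym.
  move/(TS_scale (-1) HS) => H; apply: TS_eq H _; apply: functional_extensionality => w.
  by rewrite dir2_denote // mulN1r opprK.
Qed.
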